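(* Assume $\mathscr{R}_0>\frac{\sigma_m(\mu+r)C_I}{\mu\beta}$ (equivalently $C_I<\frac{\beta A}{(\mu+r)(\mu+\beta+\rho)}$) and $$\frac{\mu^2}{\mu+r}\left(\sqrt{\frac{\beta}{\mu\sigma_m}+\frac{1}{\sigma_s}}-\sqrt{\frac{1}{\sigma_s}}\right)^2<C_I<\frac{\beta^2\sigma_s}{(\mu+r)\sigma_m^2}.$$ Then, with $K=1+\frac{\sigma_m(\mu+r)}{\mu\beta}C_I$: $E^*$ is the unique endemic equilibrium of (3) if $1<\mathscr{R}_0<(\sqrt p+\sqrt q)^2$; all of $E^*,E_1^*,E_2^*$ are endemic equilibria if $(\sqrt p+\sqrt q)^2\le\mathscr{R}_0<K$; $E^*$ and $E_1^*$ are endemic equilibria but $E_2^*$ is not if $\mathscr{R}_0=K$; $E_1^*$ is the unique endemic equilibrium if $\mathscr{R}_0>K$.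
   Context: Let $A,\sigma_m,\sigma_s,\mu,\rho,\beta,r,C_I$ be positive constants. Write $[x]^+=\max\{0,x\}$ and $T(I_s)=rI_s$ if $I_s<C_I$, $T(I_s)=rC_I$ if $I_s\ge C_I$. System (3) is $$S'=A-\sigma_mSI_m-\sigma_sS[I_s-C_I]^+-\mu S,\quad I_m'=\sigma_mSI_m+\sigma_sS[I_s-C_I]^+-(\mu+\rho+\beta)I_m,\quad I_s'=\beta I_m-T(I_s)-\mu I_s.$$ $\mathscr{R}_0=\frac{A\sigma_m}{\mu(\mu+\beta+\rho)}$. An endemic equilibrium is an equilibrium of (3) with $S,I_m,I_s>0$. $E^*=(S^*,I_m^*,I_s^* )$ with $S^*=\frac{\mu+\beta+\rho}{\sigma_m}$, $I_m^*=\frac{\mu(\mathscr{R}_0-1)}{\sigma_m}$, $I_s^*=\frac{\mu\beta(\mathscr{R}_0-1)}{\sigma_m(\mu+r)}$. Let $p=\frac{(\mu+r)\sigma_m\sigma_sC_I}{\mu(\mu\sigma_m+\beta\sigma_s)}$, $q=\frac{\mu\sigma_m}{\mu\sigma_m+\beta\sigma_s}$, and $S_{1,2}^*=\frac{\mu+\beta+\rho}{2\sigma_m}\big\{\mathscr{R}_0-p+q\mp\sqrt{(\mathscr{R}_0-p-q)^2-4pq}\big\}$ (minus sign for $S_1^*$, plus for $S_2^*$), $I_{m_i}^*=\frac{\mu\mathscr{R}_0}{\sigma_m}-\frac{\mu S_i^*}{\mu+\beta+\rho}$, $I_{s_i}^*=\frac{\beta\mathscr{R}_0}{\sigma_m}-\frac{\beta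 S_i^*}{\mu+\beta+\rho}-\frac{rC_I}{\mu}$, $E_i^*=(S_i^*,I_{m_i}^*,I_{s_i}^* )$, $i=1,2$. ''$E_i^*$ exists'' / ''$E_i^*$ is an endemic equilibrium'' means $S_i^*$ is real, $S_i^*>0$, $I_{m_i}^*>0$ and $I_{s_i}^*>C_I$; ''$E^*$ exists'' means $E^*$ is an endemic equilibrium. *)

(* Defs.v *)
From Stdlib Require Import Reals Lra.
Open Scope R_scope.

Definition pos_part (x : R) : R := Rmax 0 x.

Definition Tf (r CI Is : R) : R := if Rlt_dec Is CI then r * Is else r * CI.

Definition is_equilibrium (A sm ss mu rho beta r CI S Im Is : R) : Prop :=
  A - sm * S * Im - ss * S * pos_part (Is - CI) - mu * S = 0 /\
  sm * S * Im + ss * S * pos_part (Is - CI) - (mu + rho + beta) * Im = 0 /\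
  beta * Im - Tf r CI Is - mu * Is = 0.

Definition is_endemic_eq (A sm ss mu rho beta r CI S Im Is : R) : Prop :=
  0 < S /\ 0 < Im /\ 0 < Is /\ is_equilibrium A sm ss mu rho beta r CI S Im Is.

Definition Rnot (A sm mu rho beta : R) : R := A * sm / (mu * (mu + beta + rho)).

Definition pp (sm ss mu beta r CI : R) : R :=
  (mu + r) * sm * ss * CI / (mu * (mu * sm + beta * ss)).
Definition qq (sm ss mu beta : R) : R := mu * sm / (mu * sm + beta * ss).

Definition Sstar (sm mu rho beta : R) : R := (mu + beta + rho) / sm.
Definition Imstar (A sm mu rho beta : R) : R := mu * (Rnot A sm mu rho beta - 1) / sm.
Definition Isstar (A sm mu rho beta r : R) : R :=
  mu * beta * (Rnot A sm mu rho beta - 1) / (sm * (mu + r)).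

(* discriminant (Rnot - p - q)^2 - 4pq; S_i^* is real iff it is >= 0 *)
Definition disc (A sm ss mu rho beta r CI : R) : R :=
  let R := Rnot A sm mu rho beta in
  let p := pp sm ss mu beta r CI in
  let q := qq sm ss mu beta in
  (R - p - q) ^ 2 - 4 * p * q.

Definition S1star (A sm ss mu rho beta r CI : R) : R :=
  (mu + beta + rho) / (2 * sm) *
  (Rnot A sm mu rho beta - pp sm ss mu beta r CI + qq sm ss mu beta
   - sqrt (disc A sm ss mu rho beta r CI)).
Definition S2star (A sm ss mu rho beta r CI : R) : R :=
  (mu + beta + rho) / (2 * sm) *
  (Rnot A sm mu rho beta - pp sm ss mu beta r CI + qq sm ss mu beta
   + sqrt (disc A sm ss mu rho beta r CI)).

Definition Im_of (A sm mu rho beta S : R) : R :=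
  mu * Rnot A sm mu rho beta / sm - mu * S / (mu + beta + rho).
Definition Is_of (A sm mu rho beta r CI S : R) : R :=
  beta * Rnot A sm mu rho beta / sm - beta * S / (mu + beta + rho) - r * CI / mu.

(* "E_i^* exists / is an endemic equilibrium" in the paper's sense:
   S_i^* real, S_i^* > 0, I_{m_i}^* > 0, I_{s_i}^* > C_I *)
Definition Ei_exists (A sm ss mu rho beta r CI S : R) : Prop :=
  0 <= disc A sm ss mu rho beta r CI /\ 0 < S /\
  0 < Im_of A sm mu rho beta S /\ CI < Is_of A sm mu rho beta r CI S.

(* Main.v *)
Require Import Defs.
From Stdlib Require Import Reals Lra Psatz.
Open Scope R_scope.

Lemma classify (A sm ss mu rho beta r CI S Im Is R x q : R) :
  0 < A -> 0 < sm -> 0 < ss -> 0 < mu -> 0 < rho -> 0 < beta -> 0 < r -> 0 < CI ->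
  R = Rnot A sm mu rho beta -> x = sm*(mu+r)*CI/(mu*beta) -> q = qq sm ss mu beta ->
  is_endemic_eq A sm ss mu rho beta r CI S Im Is ->
  (Is <= CI /\ S = (mu+beta+rho)/sm /\ Im = mu*(R-1)/sm /\ Is = CI*(R-1)/x)
  \/ (CI < Is /\ Im = Im_of A sm mu rho beta S /\ Is = Is_of A sm mu rho beta r CI S /\
      0 < sm*S/(mu+beta+rho) /\ sm*S/(mu+beta+rho) < R - x /\
      (sm*S/(mu+beta+rho))^2 - (R - x*(1-q) + q)*(sm*S/(mu+beta+rho)) + q*R = 0).
Proof.
  intros HA Hsm Hss Hmu Hrho Hbeta Hr HCI HR Hx Hq [HS [HIm [HIs [e1 [e2 e3]]]]].
  unfold pos_part, Tf in *.
  assert (Ha : 0 < mu+beta+rho) by lra.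
  set (a := mu+beta+rho) in *. replace (mu+rho+beta) with a in e2 by (unfold a; ring).
  assert (low : Is <= CI -> Rmax 0 (Is - CI) = 0 -> beta*Im = (mu+r)*Is ->
     Is <= CI /\ S = a/sm /\ Im = mu*(R-1)/sm /\ Is = CI*(R-1)/x).
  { intros Hle Hm Hb. rewrite Hm in e1, e2.
    assert (HSa : sm*S = a).
    { assert ((sm*S - a)*Im = 0) by (replace ((sm*S-a)*Im) with (sm*S*Im + ss*S*0 - a*Im) by ring; exact e2).
      destruct (Rmult_integral _ _ H); lra. }
    assert (HSv : S = a/sm) by (rewrite <- HSa; field; lra).
    assert (HImv : Im = mu*(R-1)/sm).
    { rewrite HR; unfold Rnot. fold a.
      apply Rmult_eq_reg_l with a; [|lra].
      assert (a*Im = A - mu*S) by lra. rewrite H, HSv. field. lra. }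
    repeat split; auto.
    rewrite Hx. apply Rmult_eq_reg_l with (mu+r); [|lra].
    rewrite <- Hb, HImv. field. repeat split; lra. }
  revert e3. destruct (Rlt_dec Is CI) as [Hlt|Hge]; intro e3.
  - left. apply low; [lra | apply Rmax_left; lra | lra].
  - destruct (Req_dec Is CI) as [Heq|Hne].
    + left. apply low; [lra | apply Rmax_left; lra | ]. rewrite Heq in e3 |- *. lra.
    + right. assert (Hgt : CI < Is) by lra.
      rewrite Rmax_right in e1, e2 by lra.
      assert (HImv : Im = Im_of A sm mu rho beta S).
      { unfold Im_of, Rnot. fold a. apply Rmult_eq_reg_l with a; [|lra].
        assert (a*Im = A - mu*S) by lra. rewrite H. field. lra. }
      assert (HIsv : Is = Is_of A sm mu rho beta r CI S).
      { apply Rmult_eq_reg_l with mu; [|lra].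
        assert (mu*Is = beta*Im - r*CI) by lra. rewrite H, HImv.
        unfold Im_of, Is_of. field. lra. }
      assert (Hdiff : Is - CI = beta/sm*(R - sm*S/a - x)).
      { rewrite HIsv, HR, Hx. unfold Is_of, Rnot. fold a. field. lra. }
      assert (Hs0 : 0 < sm*S/a) by (apply Rdiv_lt_0_compat; nra).
      assert (Hlt2 : sm*S/a < R - x).
      { assert (0 < beta/sm*(R - sm*S/a - x)) by lra.
        assert (0 < beta/sm) by (apply Rdiv_lt_0_compat; lra).
        assert (0 < R - sm*S/a - x).
        { apply (Rmult_lt_reg_l (beta/sm)); lra. }
        lra. }
      repeat split; auto.
      set (e2e := sm * S * Im + ss * S * (Is - CI) - a * Im) in e2.
      assert (HD : 0 < mu*sm+beta*ss) by nra.
      transitivity (-(sm^2/(a*(mu*sm+beta*ss)))*e2e).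
      2: { rewrite e2. ring. }
      unfold e2e. rewrite Hdiff, HImv, Hq. unfold Im_of, qq.
      rewrite HR. unfold Rnot. fold a. field. lra.
Qed.

Section Q.
Variables (RR x q p d s1 s2 : R).
Hypothesis Hq0 : 0 < q.
Hypothesis Hq1 : q < 1.
Hypothesis Hx0 : 0 < x.
Hypothesis Hp : p = x*(1-q).
Hypothesis Hd : d = (RR-p-q)^2 - 4*p*q.
Hypothesis Hs1 : s1 = (RR - p + q - sqrt d)/2.
Hypothesis Hs2 : s2 = (RR - p + q + sqrt d)/2.

Lemma fact_roots : 0 <= d -> forall y, y^2 - (RR-p+q)*y + q*RR = (y-s1)*(y-s2).
Proof.
  intros H y. pose proof (sqrt_sqrt d H) as E. rewrite Hs1, Hs2.
  transitivity ((y - (RR-p+q)/2)^2 - (sqrt d * sqrt d)/4).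
  - rewrite E, Hd. field.
  - field.
Qed.

Lemma no_root s : 0 < s -> s < RR - x -> s^2 - (RR-p+q)*s + q*RR = 0 ->
  (sqrt p + sqrt q)^2 <= RR.
Proof.
  intros Hs Hsx Hf.
  assert (Hp0 : 0 < p) by (rewrite Hp; nra).
  pose proof (sqrt_sqrt p (Rlt_le _ _ Hp0)) as Ep.
  pose proof (sqrt_sqrt q (Rlt_le _ _ Hq0)) as Eq.
  pose proof (sqrt_pos p). pose proof (sqrt_pos q).
  set (u := RR - s - p).
  assert (Hsu : s*u = q*(u+p)) by (unfold u; nra).
  assert (Hu : 0 < u).
  { destruct (Rle_or_lt u 0); auto. exfalso.
    assert (s*u <= s*0) by (apply Rmult_le_compat_l; lra).
    assert (0 < q*(u+p)) by (apply Rmult_lt_0_compat; unfold u; lra). lra. }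
  assert (HRu : (RR-p-q)*u = q*p + u*u) by (unfold u in *; nra).
  assert (Hm : 2*sqrt p*sqrt q*u <= (RR-p-q)*u).
  { rewrite HRu. replace (q*p) with ((sqrt p * sqrt p)*(sqrt q*sqrt q)) by (rewrite Ep, Eq; ring).
    pose proof (pow2_ge_0 (u - sqrt p * sqrt q)). nra. }
  assert (2*sqrt p*sqrt q <= RR-p-q) by nra.
  nra.
Qed.

Lemma fRx : (RR-x)^2 - (RR-p+q)*(RR-x) + q*RR = q*x*(1+x-RR).
Proof. rewrite Hp. ring. Qed.

Lemma case4 : 1 + x < RR -> 0 < d /\ 0 < s1 /\ s1 < RR - x /\ RR - x < s2.
Proof.
  intros HR.
  pose proof fRx as F.
  assert (Hqx : 0 < q*x) by (apply Rmult_lt_0_compat; lra).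
  assert (Hneg : (RR-x)^2 - (RR-p+q)*(RR-x) + q*RR < 0) by (rewrite F; nra).
  assert (Hdpos : 0 < d).
  { assert (Hd' : d = (2*(RR-x) - (RR-p+q))^2 - 4*((RR-x)^2 - (RR-p+q)*(RR-x) + q*RR)) by (rewrite Hd; ring).
    pose proof (pow2_ge_0 (2*(RR-x) - (RR-p+q))). lra. }
  pose proof (fact_roots (Rlt_le _ _ Hdpos) (RR-x)) as G.
  pose proof (sqrt_lt_R0 d Hdpos) as Hsd.
  assert (s1 < s2) by (rewrite Hs1, Hs2; lra).
  assert (s1 < RR - x /\ RR - x < s2).
  { destruct (Rle_or_lt (RR-x) s1); [nra|].
    destruct (Rle_or_lt s2 (RR-x)); [nra|]. lra. }
  assert (Hprod : s1 * s2 = q*RR).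
  { pose proof (fact_roots (Rlt_le _ _ Hdpos) 0) as G0. nra. }
  repeat split; try tauto; try lra.
  destruct (Rle_or_lt s1 0); auto. nra.
Qed.

Lemma case3 : RR = 1 + x -> x*q < 1-q -> 0 < d /\ 0 < s1 /\ s1 < RR - x /\ s2 = RR - x.
Proof.
  intros HR Hxq.
  assert (F0 : (RR-x)^2 - (RR-p+q)*(RR-x) + q*RR = 0) by (rewrite fRx, HR; ring).
  assert (Hm : (RR-p+q)/2 < RR - x) by (rewrite Hp, HR; lra).
  assert (Hdpos : 0 < d).
  { assert (Hd' : d = (2*(RR-x) - (RR-p+q))^2 - 4*((RR-x)^2 - (RR-p+q)*(RR-x) + q*RR)) by (rewrite Hd; ring).
    rewrite Hd', F0. assert (0 < 2*(RR-x) - (RR-p+q)) by lra. nra. }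
  pose proof (fact_roots (Rlt_le _ _ Hdpos) (RR-x)) as G.
  pose proof (sqrt_lt_R0 d Hdpos) as Hsd.
  assert (Hs1m : s1 < (RR-p+q)/2) by (rewrite Hs1; lra).
  assert (Hs2e : s2 = RR - x).
  { rewrite F0 in G. destruct (Rmult_integral _ _ (eq_sym G)); lra. }
  assert (Hprod : s1 * s2 = q*RR).
  { pose proof (fact_roots (Rlt_le _ _ Hdpos) 0) as G0. nra. }
  repeat split; try lra.
  destruct (Rle_or_lt s1 0); auto. rewrite Hs2e in Hprod. nra.
Qed.

Lemma case2 : (sqrt p + sqrt q)^2 <= RR -> RR < 1 + x -> x*q < 1-q ->
  0 <= d /\ 0 < s1 /\ s1 <= s2 /\ s2 < RR - x.
Proof.
  intros HR1 HR2 Hxq.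
  assert (Hp0 : 0 < p) by (rewrite Hp; nra).
  pose proof (sqrt_sqrt p (Rlt_le _ _ Hp0)) as Ep.
  pose proof (sqrt_sqrt q (Rlt_le _ _ Hq0)) as Eq.
  pose proof (sqrt_pos p). pose proof (sqrt_pos q).
  assert (Hsp : x*q < sqrt p * sqrt q).
  { assert ((x*q)^2 < (sqrt p*sqrt q)^2).
    { replace ((sqrt p*sqrt q)^2) with ((sqrt p*sqrt p)*(sqrt q*sqrt q)) by ring.
      rewrite Ep, Eq, Hp. assert (0 < x*q*(1-q-x*q)) by (apply Rmult_lt_0_compat; [apply Rmult_lt_0_compat|]; lra). nra. }
    apply Rsqr_incrst_0; [rewrite !Rsqr_pow2; exact H1 | nra | nra]. }
  assert (E2 : (sqrt p + sqrt q)^2 = p + q + 2*sqrt p*sqrt q).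
  { replace ((sqrt p + sqrt q)^2) with ((sqrt p*sqrt p) + (sqrt q*sqrt q) + 2*sqrt p*sqrt q) by ring.
    rewrite Ep, Eq. ring. }
  assert (Hge : 2*sqrt p*sqrt q <= RR - p - q) by lra.
  assert (Hd0 : 0 <= d).
  { rewrite Hd. assert (H2 : (2*sqrt p*sqrt q)^2 <= (RR-p-q)^2).
    { apply pow_incr. split; [|lra]. nra. }
    replace ((2*sqrt p*sqrt q)^2) with (4*(sqrt p*sqrt p)*(sqrt q*sqrt q)) in H2 by ring.
    rewrite Ep, Eq in H2. lra. }
  pose proof (sqrt_pos d).
  assert (Hm : (RR-p+q)/2 < RR - x) by (rewrite Hp in Hge |- *; lra).
  pose proof fRx as F.
  assert (Hqx : 0 < q*x) by (apply Rmult_lt_0_compat; lra).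
  assert (Hpos : 0 < (RR-x)^2 - (RR-p+q)*(RR-x) + q*RR) by (rewrite F; apply Rmult_lt_0_compat; lra).
  pose proof (fact_roots Hd0 (RR-x)) as G.
  assert (s1 <= s2) by (rewrite Hs1, Hs2; lra).
  assert (s1 + s2 = RR - p + q) by (rewrite Hs1, Hs2; lra).
  assert (Hprod : s1 * s2 = q*RR).
  { pose proof (fact_roots Hd0 0) as G0. nra. }
  assert (s2 < RR - x).
  { destruct (Rle_or_lt (RR-x) s2); auto.
    destruct (Rle_or_lt (RR-x) s1); [lra|]. nra. }
  repeat split; auto; try lra.
Qed.

Lemma case1K : x*q < 1-q -> (sqrt p + sqrt q)^2 < 1 + x.
Proof.
  intros Hxq.
  assert (Hp0 : 0 < p) by (rewrite Hp; nra).
  pose proof (sqrt_sqrt p (Rlt_le _ _ Hp0)) as Ep.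
  pose proof (sqrt_sqrt q (Rlt_le _ _ Hq0)) as Eq.
  pose proof (sqrt_pos p). pose proof (sqrt_pos q).
  assert (Hsq : (sqrt p*sqrt q)^2 = x*(1-q)*q).
  { replace ((sqrt p*sqrt q)^2) with ((sqrt p*sqrt p)*(sqrt q*sqrt q)) by ring.
    rewrite Ep, Eq, Hp. ring. }
  assert (2*(sqrt p*sqrt q) < x*q + (1-q)).
  { assert (H3 : (2*(sqrt p*sqrt q))^2 < (x*q+(1-q))^2).
    { replace ((2*(sqrt p*sqrt q))^2) with (4*(sqrt p*sqrt q)^2) by ring. rewrite Hsq.
      assert (0 < (x*q - (1-q))^2) by (rewrite <- Rsqr_pow2; apply Rsqr_pos_lt; lra). nra. }
    apply Rsqr_incrst_0; [rewrite !Rsqr_pow2; exact H3 | nra | nra]. }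
  replace ((sqrt p + sqrt q)^2) with ((sqrt p*sqrt p) + (sqrt q*sqrt q) + 2*(sqrt p*sqrt q)) by ring.
  rewrite Ep, Eq.
  lra.
Qed.
End Q.
Ltac pos := repeat (apply Rmult_lt_0_compat || apply Rdiv_lt_0_compat || apply Rplus_lt_0_compat || apply Rinv_0_lt_compat); try lra.

Theorem theorem2p2 (A sm ss mu rho beta r CI : R) :
  0 < A -> 0 < sm -> 0 < ss -> 0 < mu -> 0 < rho -> 0 < beta -> 0 < r -> 0 < CI ->
  Rnot A sm mu rho beta > sm * (mu + r) * CI / (mu * beta) ->
  mu ^ 2 / (mu + r) * (sqrt (beta / (mu * sm) + 1 / ss) - sqrt (1 / ss)) ^ 2 < CI ->
  CI < beta ^ 2 * ss / ((mu + r) * sm ^ 2) ->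
  let R := Rnot A sm mu rho beta in
  let p := pp sm ss mu beta r CI in
  let q := qq sm ss mu beta in
  let K := 1 + sm * (mu + r) / (mu * beta) * CI in
  let Es := (Sstar sm mu rho beta, Imstar A sm mu rho beta, Isstar A sm mu rho beta r) in
  let S1 := S1star A sm ss mu rho beta r CI in
  let S2 := S2star A sm ss mu rho beta r CI in
  let E1 := (S1, Im_of A sm mu rho beta S1, Is_of A sm mu rho beta r CI S1) in
  let endemic := fun S Im Is => is_endemic_eq A sm ss mu rho beta r CI S Im Is in
  (* case 1: E^* is the unique endemic equilibrium *)
  (1 < R < (sqrt p + sqrt q) ^ 2 ->
     endemic (fst (fst Es)) (snd (fst Es)) (snd Es) /\
     forall S Im Is, endemic S Im Is -> (S, Im, Is) = Es) /\
  (* case 2: E^*, E_1^*, E_2^* are all endemic equilibria *)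
  ((sqrt p + sqrt q) ^ 2 <= R < K ->
     endemic (fst (fst Es)) (snd (fst Es)) (snd Es) /\
     Ei_exists A sm ss mu rho beta r CI S1 /\
     Ei_exists A sm ss mu rho beta r CI S2) /\
  (* case 3: E^* and E_1^* are endemic equilibria, E_2^* is not *)
  (R = K ->
     endemic (fst (fst Es)) (snd (fst Es)) (snd Es) /\
     Ei_exists A sm ss mu rho beta r CI S1 /\
     ~ Ei_exists A sm ss mu rho beta r CI S2) /\
  (* case 4: E_1^* is the unique endemic equilibrium *)
  (R > K ->
     Ei_exists A sm ss mu rho beta r CI S1 /\
     forall S Im Is, endemic S Im Is -> (S, Im, Is) = E1).
Proof.
  intros HA Hsm Hss Hmu Hrho Hbeta Hr HCI H9 H10 H11 RR p q K Es S1 S2 E1 endemic.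
  assert (Ha : 0 < mu+beta+rho) by lra.
  assert (HD : 0 < mu*sm+beta*ss) by pos.
  set (x := sm*(mu+r)*CI/(mu*beta)).
  assert (Hx0 : 0 < x) by (unfold x; pos).
  assert (HK : K = 1 + x) by (unfold K, x; field; lra).
  assert (Hq0 : 0 < q) by (unfold q, qq; pos).
  assert (H1q : 1 - q = beta*ss/(mu*sm+beta*ss)) by (unfold q, qq; field; lra).
  assert (Hq1 : q < 1).
  { assert (0 < beta*ss/(mu*sm+beta*ss)) by pos. lra. }
  assert (Hp : p = x*(1-q)) by (rewrite H1q; unfold p, x, pp; field; repeat split; lra).
  assert (Hxq : x*q < 1-q).
  { assert (E1' : x*q = CI * (sm^2*(mu+r)/(beta*(mu*sm+beta*ss))))
      by (unfold x, q, qq; field; repeat split; lra).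
    assert (E2' : 1-q = beta ^ 2 * ss / ((mu + r) * sm ^ 2) * (sm^2*(mu+r)/(beta*(mu*sm+beta*ss))))
      by (rewrite H1q; field; repeat split; lra).
    rewrite E1', E2'. apply Rmult_lt_compat_r; auto.
    pos. }
  assert (HRx : x < RR) by exact H9.
  assert (HA' : A = RR*mu*(mu+beta+rho)/sm) by (unfold RR, Rnot; field; lra).
  assert (Hsq1 : 1 < sqrt p + sqrt q).
  { set (u := sqrt (1/ss)) in H10.
    assert (Eu : u*u = 1/ss) by (unfold u; apply sqrt_sqrt; apply Rlt_le; pos).
    pose proof (sqrt_sqrt q (Rlt_le _ _ Hq0)) as Eq.
    pose proof (sqrt_lt_R0 q Hq0) as Hsq0.
    assert (Earg : beta / (mu * sm) + 1 / ss = (1/ss)/q) by (unfold q, qq; field; repeat split; lra).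
    rewrite Earg, sqrt_div_alt in H10 by lra. fold u in H10.
    set (c := mu^2/((mu+r)*ss*q)).
    assert (Hc : 0 < c) by (unfold c; pos).
    assert (Ec : mu ^ 2 / (mu + r) * (u / sqrt q - u) ^ 2 = (1 - sqrt q)^2 * c).
    { transitivity (mu^2/(mu+r) * (u*u) * (1 - sqrt q)^2 / (sqrt q * sqrt q)).
      - field. split; lra.
      - rewrite Eu, Eq. unfold c. field. repeat split; lra. }
    rewrite Ec in H10.
    assert (Epc : p = CI / c) by (unfold p, pp, c, q, qq; field; repeat split; lra).
    assert (Hlt : (1 - sqrt q)^2 < p).
    { rewrite Epc. apply (Rmult_lt_reg_r c); auto. unfold Rdiv. rewrite Rmult_assoc, Rinv_l; lra. }
    assert (Hp0 : 0 < p) by (rewrite Hp; apply Rmult_lt_0_compat; lra).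
    pose proof (sqrt_lt_R0 p Hp0).
    destruct (Rle_or_lt 1 (sqrt q)); [lra|].
    assert (1 - sqrt q < sqrt p).
    { apply Rsqr_incrst_0; try lra. rewrite !Rsqr_pow2.
      replace (sqrt p ^2) with p; auto. simpl. rewrite Rmult_1_r, sqrt_sqrt; lra. }
    lra. }
  set (d := (RR-p-q)^2 - 4*p*q).
  assert (Hdisc : Defs.disc A sm ss mu rho beta r CI = d) by reflexivity.
  set (s1 := (RR - p + q - sqrt d)/2).
  set (s2 := (RR - p + q + sqrt d)/2).
  assert (HS1 : S1 = (mu+beta+rho)*s1/sm) by (unfold S1, S1star; change (Rnot A sm mu rho beta) with RR;
        change (pp sm ss mu beta r CI) with p; change (qq sm ss mu beta) with q;
        rewrite Hdisc; unfold s1; field; lra).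
  assert (HS2 : S2 = (mu+beta+rho)*s2/sm) by (unfold S2, S2star; change (Rnot A sm mu rho beta) with RR;
        change (pp sm ss mu beta r CI) with p; change (qq sm ss mu beta) with q;
        rewrite Hdisc; unfold s2; field; lra).
  assert (HImof : forall s, Im_of A sm mu rho beta ((mu+beta+rho)*s/sm) = mu*(RR-s)/sm)
    by (intros; unfold Im_of; fold RR; field; lra).
  assert (HIsof : forall s, Is_of A sm mu rho beta r CI ((mu+beta+rho)*s/sm) = CI + beta/sm*(RR-s-x))
    by (intros; unfold Is_of, x; fold RR; field; lra).
  assert (HEi : forall s, 0 <= d -> 0 < s -> s < RR - x ->
            Ei_exists A sm ss mu rho beta r CI ((mu+beta+rho)*s/sm)).
  { intros s Hd0 Hs0 Hsx. unfold Ei_exists. rewrite Hdisc, HImof, HIsof.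
    split; [auto|]. split; [pos|]. split.
    - apply Rdiv_lt_0_compat; [apply Rmult_lt_0_compat|]; lra.
    - assert (0 < beta/sm*(RR-s-x)) by (apply Rmult_lt_0_compat; [pos|lra]). lra. }
  assert (HEi2 : forall s, Ei_exists A sm ss mu rho beta r CI ((mu+beta+rho)*s/sm) -> s < RR - x).
  { intros s [_ [_ [_ H]]]. rewrite HIsof in H.
    destruct (Rle_or_lt (RR-s-x) 0) as [Hle|]; [|lra].
    assert (beta/sm*(RR-s-x) <= beta/sm*0) by (apply Rmult_le_compat_l; [apply Rlt_le; pos|lra]).
    lra. }
  assert (EIs : Isstar A sm mu rho beta r = CI*(RR-1)/x)
    by (unfold Isstar, x; change (Rnot A sm mu rho beta) with RR; field; repeat split; lra).
  assert (HEs : 1 < RR -> RR <= K -> endemic (fst (fst Es)) (snd (fst Es)) (snd Es)).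
  { intros H1R HRK. unfold endemic, Es, is_endemic_eq, is_equilibrium; simpl.
    change (Sstar sm mu rho beta) with ((mu+beta+rho)/sm).
    change (Imstar A sm mu rho beta) with (mu*(RR-1)/sm).
    rewrite EIs.
    assert (Hle : CI*(RR-1)/x <= CI).
    { assert (CI*(RR-1)/x - CI = CI/x*(RR-1-x)) by (field; lra).
      assert (CI/x*(RR-1-x) <= CI/x*0) by (apply Rmult_le_compat_l; [apply Rlt_le; pos|lra]). lra. }
    unfold pos_part. rewrite Rmax_left by lra.
    assert (Tv : Tf r CI (CI*(RR-1)/x) = r*(CI*(RR-1)/x)).
    { unfold Tf. destruct (Rlt_dec (CI*(RR-1)/x) CI); auto.
      replace (CI*(RR-1)/x) with CI by lra. auto. }
    rewrite Tv.
    split; [pos|]. split; [apply Rdiv_lt_0_compat; [apply Rmult_lt_0_compat|]; lra|].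
    split; [apply Rdiv_lt_0_compat; [apply Rmult_lt_0_compat|]; lra|].
    split; [rewrite HA'; field; lra|].
    split; [field; lra|].
    unfold x. field. repeat split; lra. }
  assert (Hdq : d = (RR-p-q)^2-4*p*q) by reflexivity.
  assert (Hs1q : s1 = (RR-p+q-sqrt d)/2) by reflexivity.
  assert (Hs2q : s2 = (RR-p+q+sqrt d)/2) by reflexivity.
  assert (Hcls : forall S Im Is, endemic S Im Is ->
    (Is <= CI /\ S = (mu+beta+rho)/sm /\ Im = mu*(RR-1)/sm /\ Is = CI*(RR-1)/x) \/
    (CI < Is /\ Im = Im_of A sm mu rho beta S /\ Is = Is_of A sm mu rho beta r CI S /\
     0 < sm*S/(mu+beta+rho) /\ sm*S/(mu+beta+rho) < RR - x /\
     (sm*S/(mu+beta+rho))^2 - (RR - p + q)*(sm*S/(mu+beta+rho)) + q*RR = 0)).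
  { intros S Im Is H. rewrite Hp.
    apply (classify A sm ss mu rho beta r CI S Im Is RR x q); auto. }
  split; [|split; [|split]].
  -
    intros [H1R HR2].
    assert (HRK : RR < K).
    { rewrite HK. assert ((sqrt p + sqrt q)^2 < 1 + x) by (eapply case1K; eauto). lra. }
    split; [apply HEs; lra|].
    intros S Im Is Hend.
    destruct (Hcls _ _ _ Hend) as [[Hle [HSv [HImv HIsv]]] | [Hgt [_ [_ [Hs0 [Hsx Hf]]]]]].
    + subst S Im Is. unfold Es. rewrite EIs. reflexivity.
    + exfalso.
      assert ((sqrt p + sqrt q)^2 <= RR) by (apply (no_root RR x q p) with (s := sm*S/(mu+beta+rho)); auto).
      lra.
  - intros [HR1 HR2]. rewrite HK in HR2.
    destruct (case2 RR x q p d s1 s2) as [Hd0 [Hs10 [Hs12 Hs2x]]]; auto.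
    assert (1 < RR) by nra.
    split; [apply HEs; lra|].
    split; [rewrite HS1; apply HEi; lra | rewrite HS2; apply HEi; lra].
  - intros HRK. rewrite HK in HRK.
    destruct (case3 RR x q p d s1 s2) as [Hd0 [Hs10 [Hs1x Hs2e]]]; auto.
    split; [apply HEs; lra|].
    split; [rewrite HS1; apply HEi; lra|].
    intro HE. rewrite HS2 in HE. apply HEi2 in HE. lra.
  - intros HRK. rewrite HK in HRK.
    destruct (case4 RR x q p d s1 s2) as [Hd0 [Hs10 [Hs1x Hs2x]]]; auto; try lra.
    split; [rewrite HS1; apply HEi; lra|].
    intros S Im Is Hend.
    destruct (Hcls _ _ _ Hend) as [[Hle [HSv [HImv HIsv]]] | [Hgt [HImv [HIsv [Hs0 [Hsx Hf]]]]]].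
    + exfalso. rewrite HIsv in Hle.
      assert (CI*(RR-1)/x - CI = CI/x*(RR-1-x)) by (field; lra).
      assert (0 < CI/x*(RR-1-x)) by (apply Rmult_lt_0_compat; [pos|lra]). lra.
    + assert (Hfr := fact_roots RR q p d s1 s2 Hdq Hs1q Hs2q (Rlt_le _ _ Hd0) (sm*S/(mu+beta+rho))).
      rewrite Hf in Hfr.
      destruct (Rmult_integral _ _ (eq_sym Hfr)) as [Z|Z]; [|lra].
      assert (HSe : S = S1) by (rewrite HS1; replace s1 with (sm*S/(mu+beta+rho)) by lra; field; lra).
      unfold E1. rewrite HImv, HIsv, HSe. reflexivity.
Qed.
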